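(* Every $3$-januarial is of simple type; that is, its common graph $\Upsilon$ is a union of pairwise disjoint simple circuits.
   Context: Let $\Delta(2,3,\ell)=\langle x,y:x^2=y^3=(xy)^\ell=1\rangle$, acting on a finite set $S$. The coset graph has: - vertex set $S$; - an undirected $x$-edge joining each pair of points transposed by $x$; - a directed $y$-edge $u\to uy$. It is $2$-cell embedded in a closed orientable surface via the rotation system (incoming $y$-edge, outgoing $y$-edge, $x$-edge) at each vertex. The faces are $y$-faces and $xy$-faces; this is the coset diagram. A $3$-januarial is the coset diagram of such an action, for some $\ell$, in which $\langle xy\rangle$ has exactly two orbits, each of size $|S|/2$. Let $S_1,S_2$ be the closures of its two $xy$-faces. Collapsing each $y$-face to a point gives the companion diagram, with images $S_i'$ of $S_i$. The common graph is $\Upsilon=S_1'\cap S_2'$. A januarial is of simple type if $\Upsilon$ consists of pairwise disjoint simple circuits. *)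

(* Defs.v *)
From mathcomp Require Import all_boot all_fingroup.
Set Implicit Arguments. Unset Strict Implicit. Unset Printing Implicit Defensive.
Local Open Scope group_scope.

Section Januarial.
Variables (T : finType) (x y : {perm T}).

(* The action is a right action: u.(xy) = y (x u), i.e. the permutation x * y
   in MathComp (permM : (s * t) u = t (s u)). *)

(* x-edge joining u and u x (only when x transposes them): represented by the
   unordered pair {u, u x}. *)
Definition xedge (u : T) : {set T} := [set u; x u].

(* Closure S_O of the xy-face bounded by the <xy>-orbit O.  Its boundary walk is
   u -x-> u x -y-> u x y -x-> ... for u in O, so it contains:
   - the vertices O together with O x,
   - the x-edges {u, u x} (u in O, u x <> u),
   - the y-edges v -> v y for v in O x (indexed by their tail v). *)
Definition face_vertices (O : {set T}) : {set T} := O :|: [set x u | u in O].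
Definition face_xedges (O : {set T}) : {set {set T}} :=
  [set xedge u | u in O & x u != u].
Definition face_yedges (O : {set T}) : {set T} := [set x u | u in O].

(* Companion diagram: every y-face (a <y>-orbit, of size 1 or 3, with its
   y-edges) is collapsed to a point, represented by the <y>-orbit itself.
   The x-edges survive as the edges of the companion diagram.
   Image S_O' of S_O: the points images of its vertices and y-edges, and its
   x-edges (the face interior is disjoint from the other face). *)
Definition comp_vertices (O : {set T}) : {set {set T}} :=
  [set porbit y v | v in face_vertices O] :|: [set porbit y v | v in face_yedges O].
Definition comp_edges (O : {set T}) : {set {set T}} := face_xedges O.

Definition ups_vertices (O1 O2 : {set T}) := comp_vertices O1 :&: comp_vertices O2.
Definition ups_edges (O1 O2 : {set T}) := comp_edges O1 :&: comp_edges O2.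

Definition joins (e A B : {set T}) : Prop :=
  exists u, [/\ x u != u, e = xedge u, porbit y u = A & porbit y (x u) = B].

(* A simple circuit: cyclic sequence of k >= 1 distinct vertices v_0..v_{k-1}
   and distinct edges e_0..e_{k-1}, e_i joining v_i and v_{i+1 mod k}
   (k = 1 : a loop, k = 2 : two parallel edges). *)
Definition simple_circuit (vs es : seq {set T}) : Prop :=
  [/\ size es = size vs, (0 < size vs)%N, uniq vs, uniq es &
      forall i, (i < size vs)%N ->
        joins (nth set0 es i) (nth set0 vs i) (nth set0 vs ((i.+1 %% size vs)%N))].

Definition disjoint_simple_circuits (V E : {set {set T}}) : Prop :=
  exists cs : seq (seq {set T} * seq {set T}),
    [/\ forall c, c \in cs -> simple_circuit c.1 c.2,
        forall c, c \in cs -> {subset c.1 <= V} /\ {subset c.2 <= E},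
        forall v, v \in V -> #|[set i : 'I_(size cs) | v \in (nth ([::], [::]) cs i).1]| = 1%N
      & forall e, e \in E -> #|[set i : 'I_(size cs) | e \in (nth ([::], [::]) cs i).2]| = 1%N].

Definition triangle_action (l : nat) : Prop :=
  [/\ (0 < l)%N, x * x = 1, y ^+ 3 = 1 & (x * y) ^+ l = 1].

Definition januarial3 : Prop :=
  #|porbits (x * y)| = 2 /\
  forall O, O \in porbits (x * y) -> (2 * #|O|)%N = #|T|.

Definition simple_type : Prop :=
  forall O1 O2, O1 \in porbits (x * y) -> O2 \in porbits (x * y) -> O1 != O2 ->
    disjoint_simple_circuits (ups_vertices O1 O2) (ups_edges O1 O2).

End Januarial.

(* Main.v *)
Require Import Defs.
From mathcomp Require Import all_boot all_fingroup.
Set Implicit Arguments. Unset Strict Implicit. Unset Printing Implicit Defensive.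

Section Main.
Variables (T : finType) (x y : {perm T}) (O1 O2 : {set T}).
Hypotheses (hx : forall t, x (x t) = t) (hy : forall t, y (y (y t)) = t)
  (inO2 : forall t, (t \in O2) = ~~ (t \in O1))
  (hp1 : forall t, (y (x t) \in O1) = (t \in O1)).

Local Notation lab t := (t \in O1).

Lemma labxy t : lab (x t) = lab (y t).
Proof. by rewrite -[in RHS](hx t) hp1. Qed.

Lemma py1 t : y t \in porbit y t.
Proof. by have := mem_porbit y 1 t; rewrite expg1. Qed.

Lemma py2 t : y (y t) \in porbit y t.
Proof. have h := mem_porbit y 2 t. rewrite expgS expg1 permM in h. exact h. Qed.

Lemma pyy t : porbit y (y t) = porbit y t.
Proof. by apply/eqP; rewrite eq_porbit_mem py1. Qed.

Lemma pyP t w : w \in porbit y t -> [\/ w = t, w = y t | w = y (y t)].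
Proof.
move=> /porbitP [i ->].
have y3 : (y ^+ 3 = 1)%g.
  apply/permP=> z; by rewrite !expgS expg0 mulg1 !permM perm1 hy.
rewrite -(expg_mod i y3).
have : i %% 3 < 3 by rewrite ltn_mod.
case: (i %% 3) => [|[|[|k]]] // _.
- by constructor 1; rewrite expg0 perm1.
- by constructor 2; rewrite expg1.
- by constructor 3; rewrite expgS expg1 permM.
Qed.

Definition D1 u := lab u && ~~ lab (y u).

Lemma D1_uniq w w' : D1 w -> D1 w' -> w' \in porbit y w -> w' = w.
Proof.
rewrite /D1 => /andP[l1 l2] /andP[l3 l4] /pyP [->|e|e] //.
- by move: l3 l2; rewrite e => ->.
- by move: l4 l1; rewrite e hy => /negPf ->.
Qed.

Definition f u := if D1 u then (if D1 (y (x u)) then y (x u) else y (y (x u))) else u.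

Local Notation forb := (fingraph.orbit f).
Local Notation ford := (fingraph.order f).

Lemma fD1 u : D1 u -> D1 (f u).
Proof.
rewrite /f => hu; rewrite hu; case: ifP => // /negbT.
move: hu; rewrite /D1 hp1 => /andP[-> l2] /=.
rewrite negbK hy => l3; rewrite l3 /=.
by rewrite labxy.
Qed.

Lemma f_orb u : D1 u -> f u \in porbit y (x u).
Proof. by rewrite /f => ->; case: ifP => _; rewrite ?py1 ?py2. Qed.

Lemma f_inj : injective f.
Proof.
have key : forall u u', D1 u -> D1 u' -> f u = f u' -> u = u'.
  move=> u u' hu hu' e.
  have : x u' \in porbit y (x u).
    have h1 := f_orb hu; have h2 := f_orb hu'.
    rewrite -eq_porbit_mem in h1; rewrite -eq_porbit_mem in h2.
    rewrite -eq_porbit_mem -(eqP h1) -(eqP h2) e //.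
  move: hu hu'; rewrite /D1 => /andP[l1 l2] /andP[l3 l4].
  case/pyP => [e'|e'|e'].
  - by rewrite -(hx u) -e' hx.
  - by move: l4; rewrite -labxy e' hp1 l1.
  - have : y (x u') = x u by rewrite e' hy.
    by move=> e2; move: l2; rewrite -labxy -e2 hp1 l3.
move=> u u'.
case hu: (D1 u); case hu': (D1 u').
- exact: key.
- by move=> e; move: (fD1 hu); rewrite e /f hu' hu'.
- by move=> e; move: (fD1 hu'); rewrite -e /f hu hu.
- by rewrite /f hu hu'.
Qed.

Lemma f_iter u n : D1 u -> D1 (iter n f u).
Proof. by move=> hu; elim: n => //= n IH; apply: fD1. Qed.

Lemma f_fconn u v : D1 u -> fconnect f u v -> D1 v.
Proof.
move=> hu; rewrite fconnect_orbit => /trajectP [i _ ->]; exact: f_iter.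
Qed.

Lemma xedge_inj a b : D1 a -> D1 b -> xedge x a = xedge x b -> a = b.
Proof.
move=> ha hb e.
have : b \in xedge x a by rewrite e /xedge !inE eqxx.
rewrite /xedge !inE => /orP [/eqP //|/eqP eb].
move: hb ha; rewrite /D1 eb hp1 => /andP [_ l] /andP [l2 _].
by rewrite l2 in l.
Qed.

Lemma xnot a : D1 a -> x a != a.
Proof.
move=> /andP [l1 l2]; apply/eqP => e; move: l2; by rewrite -labxy e l1.
Qed.

Lemma xedgeC a : xedge x (x a) = xedge x a.
Proof. by apply/setP => z; rewrite /xedge !inE hx orbC. Qed.

Definition Circ u := (map (porbit y) (forb u), map (xedge x) (forb u)).

Lemma orbD1 u a : D1 u -> a \in forb u -> D1 a.
Proof. by move=> hu; rewrite -fconnect_orbit; apply: f_fconn. Qed.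

Lemma circ_ok u : D1 u -> simple_circuit x y (Circ u).1 (Circ u).2.
Proof.
move=> hu; rewrite /Circ /=; split.
- by rewrite !size_map.
- by rewrite size_map size_orbit fingraph.order_gt0.
- rewrite map_inj_in_uniq ?orbit_uniq // => a b ha hb e.
  apply: (D1_uniq (orbD1 hu hb) (orbD1 hu ha)).
  by rewrite -e porbit_id.
- rewrite map_inj_in_uniq ?orbit_uniq // => a b ha hb e.
  exact: (xedge_inj (orbD1 hu ha) (orbD1 hu hb)).
rewrite size_map size_orbit => i hi.
rewrite (nth_map u) ?size_orbit // (nth_map u) ?size_orbit // (nth_map u); last first.
  by rewrite size_orbit ltn_mod fingraph.order_gt0.
have nthE : forall j, j < ford u -> nth u (forb u) j = iter j f u.
  by move=> j hj; rewrite /orbit nth_traject.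
have hnext : nth u (forb u) (i.+1 %% ford u) = f (nth u (forb u) i).
  rewrite nthE ?ltn_mod ?fingraph.order_gt0 // nthE //.
  move: hi; rewrite leq_eqVlt => /orP [/eqP e|h].
  - by rewrite e modnn /= -iterS e (iter_order f_inj).
  - by rewrite modn_small.
rewrite hnext.
set a := nth u (forb u) i.
have ha : D1 a by apply: (orbD1 hu); rewrite mem_nth ?size_orbit.
exists a; split => //; first exact: xnot.
apply/eqP; rewrite eq_porbit_mem porbit_sym; exact: f_orb.
Qed.

Lemma compv (O : {set T}) (hO : forall t, (y (x t) \in O) = (t \in O)) V :
  V \in comp_vertices x y O -> exists2 w, w \in O & V = porbit y w.
Proof.
have fv : forall s, s \in face_vertices x O -> exists2 w, w \in O & porbit y s = porbit y w.
  move=> s; rewrite /face_vertices inE => /orP [hs|/imsetP [u hu ->]].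
  - by exists s.
  - by exists (y (x u)); rewrite ?hO ?pyy.
rewrite /comp_vertices inE => /orP [] /imsetP [s hs ->].
- exact: fv.
- by apply: fv; rewrite /face_vertices inE hs orbT.
Qed.

Lemma hp2 t : (y (x t) \in O2) = (t \in O2).
Proof. by rewrite !inO2 hp1. Qed.

Lemma ups_D1 V : V \in ups_vertices x y O1 O2 -> exists2 d, D1 d & V = porbit y d.
Proof.
rewrite /ups_vertices inE => /andP [/(compv hp1) [w1 h1 e1] /(compv hp2) [w2 h2 e2]].
have : w2 \in porbit y w1 by rewrite -e1 e2 porbit_id.
rewrite inO2 in h2.
have pe : forall d, d \in porbit y w1 -> porbit y w1 = porbit y d.
  by move=> d hd; apply/eqP; rewrite eq_porbit_mem porbit_sym.
case/pyP => e.
- by rewrite e h1 in h2.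
- exists w1; last by [].
  by rewrite /D1 h1 -e h2.
- case l: (y w1 \in O1).
  + exists (y w1); last by rewrite e1 (pe _ (py1 _)).
    by rewrite /D1 l -e h2.
  + exists w1; last by [].
    by rewrite /D1 h1 l.
Qed.

Lemma ups_e e : e \in ups_edges x O1 O2 -> exists2 d, D1 d & e = xedge x d.
Proof.
rewrite /ups_edges /comp_edges /face_xedges inE => /andP [/imsetP [u hu ->]] /imsetP [u' hu' e'].
move: hu hu'; rewrite !inE => /andP [l1 _] /andP [l2 _].
exists u => //.
have : u' \in xedge x u by rewrite e' /xedge !inE eqxx.
rewrite /xedge !inE => /orP [/eqP ee|/eqP ee].
- by rewrite ee inO2 l1 in l2.
- by rewrite /D1 l1 -labxy -inO2 -ee.
Qed.

Lemma D1_v d : D1 d -> porbit y d \in ups_vertices x y O1 O2.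
Proof.
move=> /andP [l1 l2].
rewrite /ups_vertices /comp_vertices !inE; apply/andP; split; apply/orP; left.
- by apply/imsetP; exists d; rewrite // /face_vertices inE l1.
- apply/imsetP; exists (y d); last by rewrite pyy.
  by rewrite /face_vertices inE inO2 l2.
Qed.

Lemma D1_e d : D1 d -> xedge x d \in ups_edges x O1 O2.
Proof.
move=> hd; have hxd := xnot hd; move: hd => /andP [l1 l2].
rewrite /ups_edges /comp_edges /face_xedges inE; apply/andP; split.
- by apply/imsetP; exists d; rewrite // inE l1.
- apply/imsetP; exists (x d); last by rewrite xedgeC.
  by rewrite inE inO2 labxy l2 hx eq_sym.
Qed.


Definition Rs := [seq r <- enum T | D1 r && (froot f r == r)].

Lemma Rs_uniq : uniq Rs.
Proof. by rewrite filter_uniq ?enum_uniq. Qed.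

Lemma fsym : connect_sym (frel f).
Proof. exact: fconnect_sym f_inj. Qed.

Lemma Rs_root d : D1 d -> froot f d \in Rs.
Proof.
move=> hd; rewrite mem_filter mem_enum andbT; apply/andP; split.
- exact: (f_fconn hd (connect_root _ d)).
- exact: (roots_root fsym).
Qed.

Lemma in_orb_root d : forall r, r \in Rs -> d \in forb r -> r = froot f d.
Proof.
move=> r; rewrite mem_filter mem_enum andbT => /andP [_ /eqP hr].
rewrite -fconnect_orbit => /(rootP fsym).
by rewrite hr.
Qed.

Lemma card_one (A B : eqType) (R : seq A) (F : A -> B) (Q : pred B) (b0 : B) r :
  uniq R -> r \in R -> Q (F r) -> (forall r', r' \in R -> Q (F r') -> r' = r) ->
  #|[set i : 'I_(size (map F R)) | Q (nth b0 (map F R) i)]| = 1%N.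
Proof.
move=> uR hr hQ hu.
have hi : index r R < size (map F R) by rewrite size_map index_mem.
rewrite (_ : [set i : 'I_(size (map F R)) | Q (nth b0 (map F R) i)] = [set Ordinal hi]) ?cards1 //.
apply/setP => i; rewrite !inE; apply/idP/eqP.
- have hi' : i < size R by rewrite -(size_map F) ltn_ord.
  rewrite (nth_map r) // => hq.
  apply: val_inj => /=.
  by rewrite -(hu _ (mem_nth r hi') hq) index_uniq.
- by move=> ->; rewrite /= (nth_map r) ?nth_index // index_mem.
Qed.

Lemma dsc : disjoint_simple_circuits x y (ups_vertices x y O1 O2) (ups_edges x O1 O2).
Proof.
have RD1 : forall r, r \in Rs -> D1 r.
  by move=> r; rewrite mem_filter => /andP [/andP [] ].
exists (map Circ Rs); split.
- move=> c /mapP [r hr ->]; exact: circ_ok (RD1 r hr).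
- move=> c /mapP [r hr ->]; split => /= v /mapP [a ha ->].
  + exact: D1_v (orbD1 (RD1 r hr) ha).
  + exact: D1_e (orbD1 (RD1 r hr) ha).
- move=> v /ups_D1 [d hd ->].
  apply: (@card_one _ _ Rs Circ (fun c => porbit y d \in c.1) ([::], [::]) (froot f d) Rs_uniq (Rs_root hd)); rewrite /Circ /=.
  + apply: map_f; rewrite -fconnect_orbit; apply/(rootP fsym); exact: (root_root fsym).
  + move=> r' hr' /mapP [a ha ea].
    have ad : a = d.
      apply: (D1_uniq hd (orbD1 (RD1 r' hr') ha)).
      by rewrite ea porbit_id.
    by apply: in_orb_root; rewrite // -ad.
- move=> e /ups_e [d hd ->].
  apply: (@card_one _ _ Rs Circ (fun c => xedge x d \in c.2) ([::], [::]) (froot f d) Rs_uniq (Rs_root hd)); rewrite /Circ /=.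
  + apply: map_f; rewrite -fconnect_orbit; apply/(rootP fsym); exact: (root_root fsym).
  + move=> r' hr' /mapP [a ha ea].
    have ad : a = d.
      by apply: (xedge_inj (orbD1 (RD1 r' hr') ha) hd).
    by apply: in_orb_root; rewrite // -ad.
Qed.
End Main.

Lemma porbits_mem (T : finType) (p : {perm T}) (O : {set T}) t :
  O \in porbits p -> (t \in O) = (porbit p t == O).
Proof. by case/imsetP => a _ ->; rewrite eq_porbit_mem. Qed.

Lemma porbit_p1 (T : finType) (p : {perm T}) t : porbit p (p t) = porbit p t.
Proof.
apply/eqP; rewrite eq_porbit_mem.
have h := mem_porbit p 1 t; rewrite expg1 in h; exact h.
Qed.

Theorem theorem1 (T : finType) (x y : {perm T}) (l : nat) :
  triangle_action x y l -> januarial3 x y -> simple_type x y.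
Proof.
move=> [_ hxx hy3 _] [hc _] O1 O2 h1 h2 hne.
have hx : forall t, x (x t) = t.
  by move=> t; have := congr1 (fun s : {perm T} => s t) hxx; rewrite permM perm1.
have hy : forall t, y (y (y t)) = t.
  move=> t; have := congr1 (fun s : {perm T} => s t) hy3.
  by rewrite !expgS expg0 mulg1 !permM perm1.
have hP : porbits (x * y) = [set O1; O2].
  apply/eqP; rewrite eq_sym eqEcard; apply/andP; split.
  - by apply/subsetP => z; rewrite !inE => /orP [/eqP->|/eqP->].
  - by rewrite cards2 hne hc.
have hor : forall t, (porbit (x * y) t == O1) || (porbit (x * y) t == O2).
  move=> t; have : porbit (x * y) t \in porbits (x * y) by apply: imset_f.
  by rewrite hP !inE.
apply: (dsc (O1 := O1) (O2 := O2)) => //.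
- move=> t; rewrite (porbits_mem _ h1) (porbits_mem _ h2).
  case/orP: (hor t) => /eqP ->; rewrite eqxx /=.
  + by apply/negbTE.
  + by rewrite eq_sym hne.
- move=> t; rewrite !(porbits_mem _ h1) -permM porbit_p1 //.
Qed.
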